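(* Let $n\ge3$ and $m,k\ge1$ be integers, let $t,u\in\mathbb{Z}_n$ with $t^2\equiv u\pmod n$, and let $G$ be the set of all $m\times k$ matrices over $\mathbb{Z}_n$ with the operation $[a_{ij}]*[b_{ij}]=[(t a_{ij}+u b_{ij})\bmod n]$. Then $(G,* )$ is a transitively commutative AG-groupoid.
   Context: An AG-groupoid is a set with a binary operation satisfying $(a*b)*c=(c*b)*a$ for all $a,b,c$. An AG-groupoid $G$ is transitively commutative if for all $a,b,c\in G$, $a*b=b*a$ and $b*c=c*b$ imply $a*c=c*a$. *)

(* Defs.v *)
From mathcomp Require Import all_boot all_order all_algebra.
Set Implicit Arguments. Unset Strict Implicit. Unset Printing Implicit Defensive.
Import GRing.Theory.
Local Open Scope ring_scope.

Definition AG_groupoid (T : Type) (op : T -> T -> T) : Prop :=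
  forall a b c : T, op (op a b) c = op (op c b) a.

Definition trans_commutative (T : Type) (op : T -> T -> T) : Prop :=
  forall a b c : T, op a b = op b a -> op b c = op c b -> op a c = op c a.

(* The operation on m x k matrices over Z_n: [a_ij]*[b_ij] = [t a_ij + u b_ij mod n].
   Arithmetic in 'Z_n is already reduction mod n. *)
Definition affine_op (n m k : nat) (t u : 'Z_n) (A B : 'M['Z_n]_(m, k)) : 'M['Z_n]_(m, k) :=
  \matrix_(i < m, j < k) (t * A i j + u * B i j).

(* Main.v *)
Require Import Defs.
From mathcomp Require Import all_boot all_order all_algebra.
From mathcomp Require Import ring.
Local Open Scope ring_scope.
Import GRing.Theory.

Theorem mainTheorem6 (n m k : nat) (t u : 'Z_n) :
  (3 <= n)%N -> (1 <= m)%N -> (1 <= k)%N -> t ^+ 2 = u ->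
  AG_groupoid (@affine_op n m k t u) /\ trans_commutative (@affine_op n m k t u).
Proof.
move=> _ _ _ htu; split.
  move=> a b c; apply/matrixP => i j; rewrite !mxE -htu; ring.
have key : forall a b : 'M['Z_n]_(m, k), affine_op t u a b = affine_op t u b a ->
   forall i j, (t - u) * (a i j - b i j) = 0.
  move=> a b /matrixP H i j; move: (H i j); rewrite !mxE => e.
  have -> : (t - u) * (a i j - b i j) =
     (t * a i j + u * b i j) - (t * b i j + u * a i j) by ring.
  by rewrite e subrr.
move=> a b c h1 h2; apply/matrixP => i j; rewrite !mxE.
have e : (t - u) * (a i j - c i j) = 0.
  have -> : (t - u) * (a i j - c i j) =
    (t - u) * (a i j - b i j) + (t - u) * (b i j - c i j) by ring.
  by rewrite (key _ _ h1) (key _ _ h2) addr0.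
apply/eqP; rewrite -subr_eq0; apply/eqP; rewrite -[RHS]e; ring.
Qed.
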